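(* Let $L>0$, $D>0$, $\alpha\in(0,1]$, $\tau_{\rm acc}>0$, $\tau_{\rm m}>0$, $h_{\rm m}>0$, $\bar h_{\rm acc}>0$, $k>0$, and let $\tau_{\rm mix},\bar h_{\rm mix},\bar\rho,\bar v,c_1,\dots,c_5$ be as in the context. Consider the closed-loop system consisting of $$\tilde\rho_t+\bar v\tilde\rho_x+\bar\rho\tilde v_x=0,\qquad \tilde v_t-c_4\tilde v_x=-c_1\tilde\rho-c_2\tilde v-c_3\tilde h_{\rm acc}\quad (x\in[0,D],\,t\ge0),$$ $$\tilde\rho(0,t)+c_5\tilde v(0,t)=0,\qquad \tilde v_t(D,t)=-c_1\tilde\rho(D,t)-c_2\tilde v(D,t)-c_3\tilde h_{\rm acc}(D,t),$$ together with the control law $\tilde h_{\rm acc}(x,t)=\frac{1}{c_3}\left(-c_1\tilde\rho(x,t)+(k-c_2)\tilde v(x,t)\right)$. For all initial conditions $(\tilde\rho(\cdot,0),\tilde v(\cdot,0))\in C^1[0,D]\times C^1[0,D]$ which satisfy first-order compatibility with the boundary conditions, there exists a positive constant $\mu$ such that for all $t\ge0$ $$\|\tilde\rho(t)\|_{C^1}+\|\tilde v(t)\|_{C^1}\le\mu\left(\|\tilde\rho(0)\|_{C^1}+\|\tilde v(0)\|_{C^1}\right)e^{-\frac k2 t}.$$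
   Context: Definitions: $\tau_{\rm mix}=\left(\frac{\alpha}{\tau_{\rm acc}}+\frac{1-\alpha}{\tau_{\rm m}}\right)^{-1}$; $\bar h_{\rm mix}=\frac{\alpha+(1-\alpha)\frac{\tau_{\rm acc}}{\tau_{\rm m}}}{\alpha+(1-\alpha)\frac{\tau_{\rm acc}}{\tau_{\rm m}}\frac{\bar h_{\rm acc}}{h_{\rm m}}}\bar h_{\rm acc}$. Given a constant inflow $q_{\rm in}>0$ with $q_{\rm in}\bar h_{\rm mix}<1$, $\bar v=\frac{L}{\frac1{q_{\rm in}}-\bar h_{\rm mix}}$, $\bar\rho=q_{\rm in}/\bar v$ (so $\frac1{\bar\rho}-L=\bar h_{\rm mix}\bar v$, and $\bar\rho<1/L$). Constants: $c_1=\frac{1}{\bar\rho^2\tau_{\rm mix}\bar h_{\rm mix}}$, $c_2=\frac1{\tau_{\rm mix}}$, $c_3=\frac{\alpha}{\tau_{\rm acc}\bar h_{\rm acc}^2}\left(\frac1{\bar\rho}-L\right)$, $c_4=\frac{L}{\bar h_{\rm mix}}$, $c_5=\frac{\bar\rho}{\bar v}$. Norms: $\|u\|_{C^1}=\max_{[0,D]}|u|+\max_{[0,D]}|u'|$, and $\tilde\rho(t)=\tilde\rho(\cdot,t)$. First-order compatibility of the closed-loop system means: $\tilde\rho(0,0)+c_5\tilde v(0,0)=0$, the time-differentiated boundary condition at $x=0$ holds at $t=0$ when time derivatives are replaced via the closed-loop PDEs (i.e. $-\bar v\tilde\rho_x(0,0)-\bar\rho\tilde v_x(0,0)+c_5(c_4\tilde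 v_x(0,0)-k\tilde v(0,0))=0$), and the dynamic boundary condition at $x=D$ is consistent with the PDE at $t=0$ (i.e. $\tilde v_x(D,0)=0$). Here $\tilde\rho,\tilde v,\tilde h_{\rm acc}$ are deviations of traffic density, speed, and ACC time-gap from a uniform congested equilibrium $(\bar\rho,\bar v,\bar h_{\rm acc})$. *)

(* Defs.v *)
From Stdlib Require Import Reals Lra.
From Coquelicot Require Import Coquelicot.
Open Scope R_scope.

Definition tau_mix (alpha tau_acc tau_m : R) : R :=
  / (alpha / tau_acc + (1 - alpha) / tau_m).

Definition h_mix (alpha tau_acc tau_m h_m hbar_acc : R) : R :=
  (alpha + (1 - alpha) * (tau_acc / tau_m)) /
  (alpha + (1 - alpha) * (tau_acc / tau_m) * (hbar_acc / h_m)) * hbar_acc.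

Definition vbar (L q_in hmix : R) : R := L / (/ q_in - hmix).
Definition rhobar (L q_in hmix : R) : R := q_in / vbar L q_in hmix.

Definition cst1 (rb tmix hmix : R) : R := / (rb ^ 2 * tmix * hmix).
Definition cst2 (tmix : R) : R := / tmix.
Definition cst3 (alpha tau_acc hbar_acc rb L : R) : R :=
  alpha / (tau_acc * hbar_acc ^ 2) * (/ rb - L).
Definition cst4 (L hmix : R) : R := L / hmix.
Definition cst5 (rb vb : R) : R := rb / vb.

Definition derive_within (S : R -> Prop) (g : R -> R) (y d : R) : Prop :=
  forall eps, 0 < eps -> exists delta, 0 < delta /\
    forall h, h <> 0 -> Rabs h < delta -> S (y + h) ->
      Rabs ((g (y + h) - g y) / h - d) < eps.

Definition in_space (D x : R) : Prop := 0 <= x <= D.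
Definition in_time (t : R) : Prop := 0 <= t.
Definition in_Omega (D x t : R) : Prop := in_space D x /\ in_time t.

Definition cont_Omega (D : R) (f : R -> R -> R) : Prop :=
  forall x t, in_Omega D x t ->
  forall eps, 0 < eps -> exists delta, 0 < delta /\
    forall x' t', in_Omega D x' t' -> Rabs (x' - x) < delta -> Rabs (t' - t) < delta ->
      Rabs (f x' t' - f x t) < eps.

Definition C1_Omega (D : R) (u ux ut : R -> R -> R) : Prop :=
  cont_Omega D u /\ cont_Omega D ux /\ cont_Omega D ut /\
  forall x t, in_Omega D x t ->
    derive_within (in_space D) (fun y => u y t) x (ux x t) /\
    derive_within in_time (fun s => u x s) t (ut x t).

(* sup-norm on [0,D]: max_{[0,D]} |f| (a max, since f is continuous) *)
Definition sup_norm (D : R) (f : R -> R) : R :=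
  real (Lub_Rbar (fun r => exists x, 0 <= x <= D /\ r = Rabs (f x))).

Definition C1_norm (D : R) (u du : R -> R) : R := sup_norm D u + sup_norm D du.

(* Main.v *)
Require Import Defs.
From Stdlib Require Import Reals Lra Psatz ClassicalEpsilon Classical.
From Coquelicot Require Import Coquelicot.
Open Scope R_scope.
Lemma absb x : - Rabs x <= x <= Rabs x.
Proof. split; [pose proof (Rle_abs (-x)); rewrite Rabs_Ropp in H; lra | apply Rle_abs]. Qed.

Lemma eq_of_small a b : (forall eps, 0 < eps -> Rabs (a - b) < eps) -> a = b.
Proof.
  intros H. destruct (Req_dec a b) as [|Hn]; auto.
  assert (Hp : 0 < Rabs (a - b)) by (apply Rabs_pos_lt; lra).
  specialize (H _ Hp); lra.
Qed.

Definition cw (U : R -> R) s1 s2 y := forall eta, 0 < eta -> exists dl, 0 < dl /\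
  forall s, s1 <= s <= s2 -> Rabs (s - y) < dl -> Rabs (U s - U y) < eta.

Lemma dexp k s : derivable_pt_lim (fun s => exp (k * s)) s (k * exp (k * s)).
Proof. apply is_derive_Reals. auto_derive; auto; ring. Qed.

Lemma closure U G s1 s2 y : cw U s1 s2 y -> s1 <= y <= s2 -> continuity_pt G y ->
  (forall s, s1 < s < s2 -> U s = G s) ->
  (forall r, 0 < r -> exists s, s1 < s < s2 /\ Rabs (s - y) < r) -> U y = G y.
Proof.
  intros Hc Hy HG Heq Hclose. apply eq_of_small; intros eps Heps.
  destruct (Hc (eps/2)) as [dl [Hdl H1]]; [lra|].
  unfold continuity_pt, continue_in, limit1_in, limit_in in HG; simpl in HG.
  destruct (HG (eps/2)) as [alp [Halp H2]]; [lra|].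
  destruct (Hclose (Rmin dl alp)) as [s [Hs Hsy]]; [apply Rmin_pos; lra|].
  destruct (Req_dec s y) as [Esy|H].
  { subst s. rewrite Heq by lra. rewrite Rminus_diag, Rabs_R0. lra. }
  specialize (H1 s ltac:(lra) ltac:(eapply Rlt_le_trans; [apply Hsy| apply Rmin_l])).
  specialize (H2 s (conj (conj I (not_eq_sym H)) ltac:(unfold Rdist; eapply Rlt_le_trans; [apply Hsy| apply Rmin_r]))).
  unfold Rdist in H2. rewrite Heq in H1 by lra.
  replace (U y - G y) with (- (G s - U y) + (G s - G y)) by ring.
  eapply Rle_lt_trans; [apply Rabs_triang|]. rewrite Rabs_Ropp. lra.
Qed.

Lemma const_core U k s1 s2 : s1 <= s2 ->
  (forall s, s1 < s < s2 -> derivable_pt_lim U s (- k * U s)) ->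
  cw U s1 s2 s1 -> cw U s1 s2 s2 -> exp (k * s2) * U s2 = exp (k * s1) * U s1.
Proof.
  intros Hs HU C1 C2.
  destruct (Req_dec s1 s2) as [<-|Hne]; [reflexivity|].
  set (g := fun s => exp (k * s) * U s).
  assert (Hg : forall s, s1 < s < s2 -> derivable_pt_lim g s 0).
  { intros s Hs'. pose proof (derivable_pt_lim_mult _ _ _ _ _ (dexp k s) (HU s Hs')) as HM.
    replace 0 with (k * exp (k*s) * U s + exp (k*s) * (-k * U s)) by ring. exact HM. }
  assert (Hconst : forall a b, s1 < a < s2 -> s1 < b < s2 -> g b = g a).
  { intros a b Ha Hb.
    assert (Hin : forall x, Rmin a b <= x <= Rmax a b -> s1 < x < s2).
    { intros x Hx. destruct (Rle_dec a b).
      - rewrite Rmin_left, Rmax_right in Hx by lra; lra.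
      - rewrite Rmin_right, Rmax_left in Hx by lra; lra. }
    destruct (MVT_gen g a b (fun _ => 0)) as [c [_ Hc]].
    - intros x Hx. apply is_derive_Reals, Hg, Hin; lra.
    - intros x Hx. apply derivable_continuous_pt. exists 0. apply Hg, Hin; lra.
    - simpl in Hc. lra. }
  set (C := g ((s1 + s2) / 2)).
  assert (Heq : forall s, s1 < s < s2 -> U s = C * exp (- k * s)).
  { intros s Hs'. unfold C. rewrite (Hconst s ((s1+s2)/2)) by lra. unfold g.
    replace (exp (k * s) * U s * exp (- k * s)) with (U s * (exp (k * s) * exp (- k * s))) by ring.
    rewrite <- exp_plus. replace (k * s + - k * s) with 0 by ring. rewrite exp_0; ring. }
  assert (HG : forall y, continuity_pt (fun s => C * exp (- k * s)) y).
  { intros y. apply derivable_continuous_pt. exists (C * (- k * exp (- k * y))).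
    apply (derivable_pt_lim_scal (fun s => exp (- k * s))). apply dexp. }
  assert (E1 : U s1 = C * exp (- k * s1)).
  { apply (closure U (fun s => C * exp (- k * s)) s1 s2); auto; try lra.
    intros r Hr. exists (s1 + Rmin r (s2 - s1) / 2).
    pose proof (Rmin_l r (s2 - s1)); pose proof (Rmin_r r (s2 - s1));
    assert (0 < Rmin r (s2 - s1)) by (apply Rmin_pos; lra).
    split; [lra|]. rewrite Rabs_pos_eq; lra. }
  assert (E2 : U s2 = C * exp (- k * s2)).
  { apply (closure U (fun s => C * exp (- k * s)) s1 s2); auto; try lra.
    intros r Hr. exists (s2 - Rmin r (s2 - s1) / 2).
    pose proof (Rmin_l r (s2 - s1)); pose proof (Rmin_r r (s2 - s1));
    assert (0 < Rmin r (s2 - s1)) by (apply Rmin_pos; lra).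
    split; [lra|]. rewrite Rabs_left; lra. }
  rewrite E1, E2.
  replace (exp (k * s2) * (C * exp (- k * s2))) with (C * (exp (k * s2) * exp (- k * s2))) by ring.
  replace (exp (k * s1) * (C * exp (- k * s1))) with (C * (exp (k * s1) * exp (- k * s1))) by ring.
  rewrite <- !exp_plus. replace (k * s2 + - k * s2) with 0 by ring. replace (k * s1 + - k * s1) with 0 by ring.
  reflexivity.
Qed.
Lemma dw_interior S g y d r : derive_within S g y d -> 0 < r ->
  (forall z, Rabs (z - y) < r -> S z) -> derivable_pt_lim g y d.
Proof.
  intros H Hr HS eps Heps.
  destruct (H eps Heps) as [dl [Hdl H']].
  assert (Hp : 0 < Rmin dl r) by (apply Rmin_pos; lra).
  exists (mkposreal _ Hp); intros h hn hl; simpl in hl.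
  apply H'; auto.
  - apply Rlt_le_trans with (1 := hl); apply Rmin_l.
  - apply HS. replace (y + h - y) with h by ring.
    apply Rlt_le_trans with (1 := hl); apply Rmin_r.
Qed.
Lemma dw_unique D g G y d d' : 0 < D -> 0 <= y <= D ->
  (forall z, 0 <= z <= D -> g z = G z) ->
  derive_within (in_space D) g y d -> derivable_pt_lim G y d' -> d = d'.
Proof.
  intros HD Hy Heq H1 H2. apply eq_of_small; intros eps Heps.
  destruct (H1 (eps/2)) as [d1 [Hd1 K1]]; [lra|].
  destruct (H2 (eps/2)) as [d2 K2]; [lra|].
  pose proof (cond_pos d2) as Hd2.
  set (mm := Rmin (Rmin d1 d2) D / 2).
  assert (Hm0 : 0 < mm) by (unfold mm; apply Rdiv_lt_0_compat; [repeat apply Rmin_pos|]; lra).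
  assert (Hm1 : mm < d1) by (unfold mm; pose proof (Rmin_l (Rmin d1 d2) D); pose proof (Rmin_l d1 d2); lra).
  assert (Hm2 : mm < d2) by (unfold mm; pose proof (Rmin_l (Rmin d1 d2) D); pose proof (Rmin_r d1 d2); lra).
  assert (Hm3 : mm <= D / 2) by (unfold mm; pose proof (Rmin_r (Rmin d1 d2) D); lra).
  assert (exists h, h <> 0 /\ Rabs h = mm /\ 0 <= y + h <= D) as [h [hn [hm hy]]].
  { destruct (Rle_dec y (D/2)).
    - exists mm; rewrite Rabs_pos_eq; [|lra]; repeat split; lra.
    - exists (-mm); rewrite Rabs_Ropp, Rabs_pos_eq; [|lra]; repeat split; lra. }
  specialize (K1 h hn ltac:(lra) hy).
  specialize (K2 h hn ltac:(lra)).
  rewrite <- (Heq (y+h) hy), <- (Heq y Hy) in K2.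
  replace (d - d') with (- ((g (y + h) - g y) / h - d) + ((g (y + h) - g y) / h - d')) by ring.
  eapply Rle_lt_trans; [apply Rabs_triang|]. rewrite Rabs_Ropp. lra.
Qed.
Lemma chain D u ux ut a x0 s0 : C1_Omega D u ux ut -> 0 < x0 < D -> 0 < s0 ->
  derivable_pt_lim (fun s => u (x0 + a * (s - s0)) s) s0 (a * ux x0 s0 + ut x0 s0).
Proof.
  intros [Cu [Cux [Cut Hd]]] Hx Hs eps Heps.
  assert (HO : in_Omega D x0 s0) by (split; red; lra).
  assert (Ha : 0 < Rabs a + 1) by (pose proof (Rabs_pos a); lra).
  destruct (Cux x0 s0 HO (eps / (2 * (Rabs a + 1)))) as [d1 [Hd1 H1]].
  { apply Rdiv_lt_0_compat; lra. }
  destruct (Hd x0 s0 HO) as [_ Ht].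
  destruct (Ht (eps/2)) as [d2 [Hd2 H2]]; [lra|].
  set (M := Rmin d1 (Rmin x0 (D - x0))).
  assert (HM : 0 < M) by (unfold M; repeat apply Rmin_pos; lra).
  assert (HM1 : M <= d1) by apply Rmin_l.
  assert (HM2 : M <= x0) by (unfold M; pose proof (Rmin_r d1 (Rmin x0 (D - x0))); pose proof (Rmin_l x0 (D-x0)); lra).
  assert (HM3 : M <= D - x0) by (unfold M; pose proof (Rmin_r d1 (Rmin x0 (D - x0))); pose proof (Rmin_r x0 (D-x0)); lra).
  assert (Hp : 0 < Rmin (M / (Rabs a + 1)) (Rmin d2 s0)).
  { repeat apply Rmin_pos; try lra. apply Rdiv_lt_0_compat; lra. }
  exists (mkposreal _ Hp); intros h hn hl; simpl in hl.
  assert (hl1 : Rabs h < M / (Rabs a + 1)) by (eapply Rlt_le_trans; [apply hl| apply Rmin_l]).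
  assert (hl2 : Rabs h < d2) by (eapply Rlt_le_trans; [apply hl|]; eapply Rle_trans; [apply Rmin_r| apply Rmin_l]).
  assert (hl3 : Rabs h < s0) by (eapply Rlt_le_trans; [apply hl|]; eapply Rle_trans; [apply Rmin_r| apply Rmin_r]).
  assert (hah : Rabs (a * h) < M).
  { rewrite Rabs_mult. apply Rmult_lt_compat_r with (r := Rabs a + 1) in hl1; [|lra].
    unfold Rdiv in hl1; rewrite Rmult_assoc, Rinv_l, Rmult_1_r in hl1 by lra.
    pose proof (Rabs_pos h); pose proof (Rabs_pos a); nra. }
  assert (hM : Rabs h < M).
  { apply Rlt_le_trans with (1 := hl1). apply Rmult_le_reg_r with (Rabs a + 1); [lra|].
    unfold Rdiv; rewrite Rmult_assoc, Rinv_l by lra. pose proof (Rabs_pos a); nra. }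
  pose proof (absb (a*h)) as [Hah1 Hah2].
  pose proof (absb h) as [Hh1 Hh2].
  assert (Hsh : 0 < s0 + h) by lra.
  assert (Hint : forall y, Rmin x0 (x0 + a*h) <= y <= Rmax x0 (x0 + a*h) -> 0 < y < D).
  { intros y [Hy1 Hy2].
    destruct (Rle_dec x0 (x0 + a*h)).
    - rewrite Rmin_left, Rmax_right in * by lra; lra.
    - rewrite Rmin_right, Rmax_left in * by lra; lra. }
  assert (Hder : forall y, 0 < y < D ->
     derivable_pt_lim (fun z => u z (s0 + h)) y (ux y (s0 + h))).
  { intros y Hy. destruct (Hd y (s0+h)) as [Hx' _]; [split; red; lra|].
    apply dw_interior with (S := in_space D) (r := Rmin y (D - y)); auto.
    - apply Rmin_pos; lra.
    - intros z Hz; red. pose proof (Rmin_l y (D-y)); pose proof (Rmin_r y (D-y)).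
      pose proof (absb (z - y)); lra. }
  destruct (MVT_gen (fun z => u z (s0 + h)) x0 (x0 + a*h) (fun z => ux z (s0 + h))) as [c [Hc Hc2]].
  { intros y Hy. apply is_derive_Reals. apply Hder, Hint; lra. }
  { intros y Hy. apply derivable_continuous_pt. exists (ux y (s0+h)). apply Hder, Hint; lra. }
  simpl in Hc2.
  assert (Hc' : Rabs (c - x0) < M).
  { destruct (Rle_dec x0 (x0 + a*h)).
    - rewrite Rmin_left, Rmax_right in Hc by lra; apply Rabs_def1; lra.
    - rewrite Rmin_right, Rmax_left in Hc by lra; apply Rabs_def1; lra. }
  assert (HcO : in_Omega D c (s0 + h)).
  { pose proof (Hint c Hc). split; red; lra. }
  specialize (H1 c (s0 + h) HcO ltac:(lra) ltac:(replace (s0 + h - s0) with h by ring; lra)).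
  specialize (H2 h hn ltac:(lra) ltac:(red; lra)).
  replace (x0 + a * (s0 + h - s0)) with (x0 + a * h) by ring.
  replace (x0 + a * (s0 - s0)) with x0 by ring.
  replace ((u (x0 + a * h) (s0 + h) - u x0 s0) / h - (a * ux x0 s0 + ut x0 s0))
    with (a * (ux c (s0 + h) - ux x0 s0) + ((u x0 (s0 + h) - u x0 s0) / h - ut x0 s0)).
  2:{ replace (u (x0 + a * h) (s0 + h) - u x0 s0) with
        ((u (x0 + a * h) (s0 + h) - u x0 (s0 + h)) + (u x0 (s0 + h) - u x0 s0)) by ring.
      rewrite Hc2. field. auto. }
  eapply Rle_lt_trans; [apply Rabs_triang|]. rewrite Rabs_mult.
  assert (Rabs a * Rabs (ux c (s0 + h) - ux x0 s0) <= eps / 2).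
  { apply Rle_trans with (Rabs a * (eps / (2 * (Rabs a + 1)))).
    - apply Rmult_le_compat_l; [apply Rabs_pos| lra].
    - apply Rmult_le_reg_r with (2 * (Rabs a + 1)); [lra|].
      replace (Rabs a * (eps / (2 * (Rabs a + 1))) * (2 * (Rabs a + 1))) with (Rabs a * eps) by (field; lra).
      pose proof (Rabs_pos a). nra. }
  lra.
Qed.

Lemma cw_line D u a x2 s1 s2 y : cont_Omega D u -> 0 <= s1 ->
  (forall s, s1 <= s <= s2 -> 0 <= x2 + a*(s - s2) <= D) -> s1 <= y <= s2 ->
  cw (fun s => u (x2 + a * (s - s2)) s) s1 s2 y.
Proof.
  intros Cu Hs1 Hx Hy eta Heta.
  assert (Ha : 0 < Rabs a + 1) by (pose proof (Rabs_pos a); lra).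
  destruct (Cu (x2 + a * (y - s2)) y) with (eps := eta) as [dl [Hdl H]]; auto.
  { split; [apply Hx; lra | red; lra]. }
  exists (dl / (Rabs a + 1)); split; [apply Rdiv_lt_0_compat; lra|].
  intros s Hs Hsy. apply H.
  - split; [apply Hx; lra | red; lra].
  - replace (x2 + a * (s - s2) - (x2 + a * (y - s2))) with (a * (s - y)) by ring.
    rewrite Rabs_mult.
    apply Rmult_lt_compat_r with (r := Rabs a + 1) in Hsy; [|lra].
    unfold Rdiv in Hsy; rewrite Rmult_assoc, Rinv_l, Rmult_1_r in Hsy by lra.
    pose proof (Rabs_pos (s - y)); pose proof (Rabs_pos a); nra.
  - apply Rlt_le_trans with (1 := Hsy). apply Rmult_le_reg_r with (Rabs a + 1); [lra|].
    unfold Rdiv; rewrite Rmult_assoc, Rinv_l by lra. pose proof (Rabs_pos a); nra.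
Qed.

Lemma char D u ux ut k a x2 s1 s2 : C1_Omega D u ux ut -> 0 <= s1 <= s2 ->
  (forall s, s1 <= s <= s2 -> 0 <= x2 + a*(s - s2) <= D) ->
  (forall s, s1 < s < s2 -> 0 < x2 + a*(s - s2) < D) ->
  (forall s, s1 < s < s2 -> k * u (x2 + a*(s-s2)) s + a * ux (x2 + a*(s-s2)) s
                             + ut (x2 + a*(s-s2)) s = 0) ->
  exp (k*s2) * u x2 s2 = exp (k*s1) * u (x2 + a*(s1 - s2)) s1.
Proof.
  intros HC Hs Hx Hxi Hpde.
  pose proof (const_core (fun s => u (x2 + a * (s - s2)) s) k s1 s2) as H.
  cbv beta in H. replace (x2 + a * (s2 - s2)) with x2 in H by ring.
  apply H; [lra| | apply (cw_line D); auto; try lra; apply HC..].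
  intros s Hs'.
  pose proof (chain D u ux ut a (x2 + a * (s - s2)) s HC (Hxi s Hs') ltac:(lra)) as Hc.
  apply is_derive_Reals in Hc. apply is_derive_Reals.
  eapply is_derive_ext; [|replace (- k * u (x2 + a * (s - s2)) s) with
      (a * ux (x2 + a * (s - s2)) s + ut (x2 + a * (s - s2)) s); [exact Hc|]].
  - intros t; simpl. f_equal; ring.
  - specialize (Hpde s Hs'). lra.
Qed.
Lemma bnd2 D T f : 0 < D -> 0 <= T -> cont_Omega D f ->
  exists B, 0 <= B /\ forall x t, 0 <= x <= D -> 0 <= t <= T -> Rabs (f x t) <= B.
Proof.
  intros HD HT Cf.
  assert (Hex : forall u v, {dl : posreal | in_Omega D u v -> forall x' t', in_Omega D x' t' ->
     Rabs (x' - u) < dl -> Rabs (t' - v) < dl -> Rabs (f x' t' - f u v) < 1}).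
  { intros u v. apply constructive_indefinite_description.
    destruct (classic (in_Omega D u v)) as [Hi|Hn].
    - destruct (Cf u v Hi 1 Rlt_0_1) as [dl [Hdl H]].
      exists (mkposreal dl Hdl); intros _; exact H.
    - exists (mkposreal 1 Rlt_0_1); intros Hi; contradiction. }
  destruct (compactness_value_2d 0 D 0 T (fun u v => pos_div_2 (proj1_sig (Hex u v)))) as [d Hd].
  pose proof (cond_pos d) as Hd0.
  assert (UC : forall x y x' y', 0 <= x <= D -> 0 <= y <= T -> 0 <= x' <= D -> 0 <= y' <= T ->
     Rabs (x - x') < d -> Rabs (y - y') < d -> Rabs (f x y - f x' y') < 2).
  { intros x y x' y' Hx Hy Hx' Hy' Hxx Hyy.
    destruct (classic (Rabs (f x y - f x' y') < 2)) as [|Hn]; auto. exfalso.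
    apply (Hd x y Hx Hy). intros [u [v [Hu [Hv [H1 [H2 H3]]]]]]. apply Hn.
    destruct (Hex u v) as [dl Hdl]; simpl in *.
    assert (HO : in_Omega D u v) by (split; red; lra).
    assert (A1 : Rabs (f x y - f u v) < 1).
    { apply Hdl; auto; [split; red; lra | lra | lra]. }
    assert (A2 : Rabs (f x' y' - f u v) < 1).
    { apply Hdl; auto; [split; red; lra | |].
      - replace (x' - u) with (-(x - x') + (x - u)) by ring.
        eapply Rle_lt_trans; [apply Rabs_triang|]. rewrite Rabs_Ropp. lra.
      - replace (y' - v) with (-(y - y') + (y - v)) by ring.
        eapply Rle_lt_trans; [apply Rabs_triang|]. rewrite Rabs_Ropp. lra. }
    replace (f x y - f x' y') with ((f x y - f u v) - (f x' y' - f u v)) by ring.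
    eapply Rle_lt_trans; [apply Rabs_triang|]. rewrite Rabs_Ropp. lra. }
  destruct (INR_archimed d (D + T)) as [N HN]; [lra|].
  assert (HN0 : 0 < INR N) by (destruct (Rle_lt_dec (INR N) 0); [nra|lra]).
  exists (Rabs (f 0 0) + 2 * INR N). split; [pose proof (Rabs_pos (f 0 0)); lra|].
  intros x t Hx Ht.
  assert (Hstep : forall i, (i <= N)%nat ->
    Rabs (f (x * INR i / INR N) (t * INR i / INR N) - f 0 0) <= 2 * INR i).
  { induction i as [|i IH]; intros Hi.
    - replace (x * INR 0 / INR N) with 0 by (simpl; field; lra).
      replace (t * INR 0 / INR N) with 0 by (simpl; field; lra).
      rewrite Rminus_diag, Rabs_R0. simpl; lra.
    - assert (HiN : INR (S i) <= INR N) by (apply le_INR; lia).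
      assert (Hi0 : 0 <= INR i) by apply pos_INR.
      rewrite S_INR in *.
      specialize (IH ltac:(lia)).
      assert (B1 : forall z Z, 0 <= z <= Z -> 0 <= INR i -> INR i + 1 <= INR N ->
          0 <= z * INR i / INR N <= Z /\ 0 <= z * (INR i + 1) / INR N <= Z).
      { intros z Z Hz _ _. split; split.
        - apply Rmult_le_pos; [nra| left; apply Rinv_0_lt_compat; lra].
        - apply Rmult_le_reg_r with (INR N); [lra|]. unfold Rdiv; rewrite Rmult_assoc, Rinv_l by lra. nra.
        - apply Rmult_le_pos; [nra| left; apply Rinv_0_lt_compat; lra].
        - apply Rmult_le_reg_r with (INR N); [lra|]. unfold Rdiv; rewrite Rmult_assoc, Rinv_l by lra. nra. }
      destruct (B1 x D Hx Hi0 HiN) as [Bx1 Bx2]. destruct (B1 t T Ht Hi0 HiN) as [Bt1 Bt2].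
      assert (Hsm : forall z Z, 0 <= z <= Z -> Z < INR N * d -> Rabs (z * INR i / INR N - z * (INR i + 1) / INR N) < d).
      { intros z Z Hz HZ. replace (z * INR i / INR N - z * (INR i + 1) / INR N) with (- (z / INR N)) by (field; lra).
        rewrite Rabs_Ropp, Rabs_pos_eq.
        - apply Rmult_lt_reg_r with (INR N); [lra|]. unfold Rdiv; rewrite Rmult_assoc, Rinv_l by lra. nra.
        - apply Rmult_le_pos; [lra| left; apply Rinv_0_lt_compat; lra]. }
      pose proof (UC _ _ _ _ Bx1 Bt1 Bx2 Bt2 (Hsm x D Hx ltac:(lra)) (Hsm t T Ht ltac:(lra))) as U.
      replace (f (x * (INR i + 1) / INR N) (t * (INR i + 1) / INR N) - f 0 0) with
        (- (f (x * INR i / INR N) (t * INR i / INR N) - f (x * (INR i + 1) / INR N) (t * (INR i + 1) / INR N))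
         + (f (x * INR i / INR N) (t * INR i / INR N) - f 0 0)) by ring.
      eapply Rle_trans; [apply Rabs_triang|]. rewrite Rabs_Ropp. lra. }
  specialize (Hstep N (Nat.le_refl N)).
  replace (x * INR N / INR N) with x in Hstep by (field; lra).
  replace (t * INR N / INR N) with t in Hstep by (field; lra).
  replace (f x t) with ((f x t - f 0 0) + f 0 0) by ring.
  eapply Rle_trans; [apply Rabs_triang|]. lra.
Qed.
Lemma sup_props D f M : 0 <= D -> (forall x, 0 <= x <= D -> Rabs (f x) <= M) ->
  (forall x, 0 <= x <= D -> Rabs (f x) <= sup_norm D f) /\ sup_norm D f <= M.
Proof.
  intros HD HM. unfold sup_norm.
  set (E := fun r => exists x, 0 <= x <= D /\ r = Rabs (f x)).
  destruct (Lub_Rbar_correct E) as [Hub Hlub].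
  assert (H1 : Rbar_le (Lub_Rbar E) M).
  { apply Hlub. intros r [x [Hx ->]]. simpl. auto. }
  assert (H2 : forall x, 0 <= x <= D -> Rbar_le (Rabs (f x)) (Lub_Rbar E)).
  { intros x Hx. apply Hub. exists x; auto. }
  specialize (H2 0 ltac:(lra)) as H0.
  revert H1 H0; destruct (Lub_Rbar E) as [l| |]; simpl; intros H1 H0; try contradiction.
  split; [intros x Hx; exact (H2 x Hx) | exact H1].
Qed.

Lemma exp_le x y : x <= y -> exp x <= exp y.
Proof. intros [H|H]; [left; apply exp_increasing; auto | subst; lra]. Qed.

Lemma ode_D D u ux ut k : C1_Omega D u ux ut -> 0 <= D ->
  (forall t, 0 < t -> k * u D t + ut D t = 0) ->
  forall t, 0 <= t -> exp (k * t) * u D t = u D 0.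
Proof.
  intros [Cu [_ [_ Hd]]] HD Hode t Ht.
  pose proof (const_core (fun s => u D s) k 0 t Ht) as H.
  rewrite Rmult_0_r, exp_0, Rmult_1_l in H. apply H.
  - intros s Hs. destruct (Hd D s) as [_ Hts]; [split; red; lra|].
    replace (- k * u D s) with (ut D s) by (specialize (Hode s ltac:(lra)); lra).
    apply dw_interior with (S := in_time) (r := s); auto; [lra|].
    intros z Hz; red. pose proof (absb (z - s)); lra.
  - intros eta Heta. destruct (Cu D 0 ltac:(split; red; lra) eta Heta) as [dl [Hdl H']].
    exists dl; split; auto. intros s Hs Hsy. apply H'; auto; [split; red; lra|].
    rewrite Rminus_diag, Rabs_R0; lra.
  - intros eta Heta. destruct (Cu D t ltac:(split; red; lra) eta Heta) as [dl [Hdl H']].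
    exists dl; split; auto. intros s Hs Hsy. apply H'; auto; [split; red; lra|].
    rewrite Rminus_diag, Rabs_R0; lra.
Qed.
Theorem theorem1
  (L D alpha tau_acc tau_m h_m hbar_acc k q_in : R)
  (HL : 0 < L) (HD : 0 < D) (Halpha : 0 < alpha <= 1)
  (Htacc : 0 < tau_acc) (Htm : 0 < tau_m) (Hhm : 0 < h_m)
  (Hhacc : 0 < hbar_acc) (Hk : 0 < k)
  (Hq : 0 < q_in)
  (Hqh : q_in * h_mix alpha tau_acc tau_m h_m hbar_acc < 1)
  (rho v h_acc rho_x rho_t v_x v_t : R -> R -> R) :
  let tmix := tau_mix alpha tau_acc tau_m in
  let hmix := h_mix alpha tau_acc tau_m h_m hbar_acc in
  let vb := vbar L q_in hmix in
  let rb := rhobar L q_in hmix in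
  let K1 := cst1 rb tmix hmix in
  let K2 := cst2 tmix in
  let K3 := cst3 alpha tau_acc hbar_acc rb L in
  let K4 := cst4 L hmix in
  let K5 := cst5 rb vb in
  (* classical C^1 solution on [0,D] x [0,+oo) *)
  C1_Omega D rho rho_x rho_t ->
  C1_Omega D v v_x v_t ->
  (* control law *)
  (forall x t, in_Omega D x t ->
     h_acc x t = / K3 * (- K1 * rho x t + (k - K2) * v x t)) ->
  (* PDEs *)
  (forall x t, in_Omega D x t ->
     rho_t x t + vb * rho_x x t + rb * v_x x t = 0) ->
  (forall x t, in_Omega D x t ->
     v_t x t - K4 * v_x x t = - K1 * rho x t - K2 * v x t - K3 * h_acc x t) ->
  (* boundary conditions *)
  (forall t, in_time t -> rho 0 t + K5 * v 0 t = 0) ->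
  (forall t, in_time t ->
     v_t D t = - K1 * rho D t - K2 * v D t - K3 * h_acc D t) ->
  (* first-order compatibility of the initial data *)
  rho 0 0 + K5 * v 0 0 = 0 ->
  - vb * rho_x 0 0 - rb * v_x 0 0 + K5 * (K4 * v_x 0 0 - k * v 0 0) = 0 ->
  v_x D 0 = 0 ->
  exists mu, 0 < mu /\
    forall t, 0 <= t ->
      C1_norm D (fun x => rho x t) (fun x => rho_x x t)
      + C1_norm D (fun x => v x t) (fun x => v_x x t)
      <= mu * (C1_norm D (fun x => rho x 0) (fun x => rho_x x 0)
               + C1_norm D (fun x => v x 0) (fun x => v_x x 0))
         * exp (- (k / 2) * t).
Proof.
  intros tmix hmix vb rb K1 K2 K3 K4 K5 HCr HCv Hctrl Hpr Hpv Hb0 HbD Hc1 Hc2 Hc3.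
  assert (Hp : 0 < tau_acc / tau_m) by (apply Rdiv_lt_0_compat; lra).
  assert (Hp2 : 0 < hbar_acc / h_m) by (apply Rdiv_lt_0_compat; lra).
  assert (Hhmix : 0 < hmix).
  { unfold hmix, h_mix. apply Rmult_lt_0_compat; [|lra]. 
    assert (0 <= (1 - alpha) * (tau_acc / tau_m)) by (apply Rmult_le_pos; lra).
    assert (0 <= (1 - alpha) * (tau_acc / tau_m) * (hbar_acc / h_m)) by (apply Rmult_le_pos; lra).
    apply Rdiv_lt_0_compat; lra. }
  assert (Hqh2 : q_in * hmix < 1) by exact Hqh.
  assert (Hqh' : 0 < q_in * hmix) by (apply Rmult_lt_0_compat; lra).
  assert (Hden : 0 < / q_in - hmix).
  { replace (/ q_in - hmix) with ((1 - q_in * hmix) / q_in) by (field; lra).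
    apply Rdiv_lt_0_compat; lra. }
  assert (Hvb : 0 < vb) by (unfold vb, vbar; apply Rdiv_lt_0_compat; lra).
  assert (Hrb : 0 < rb) by (unfold rb, rhobar; fold vb; apply Rdiv_lt_0_compat; lra).
  assert (HK3 : 0 < K3).
  { unfold K3, cst3.
    assert (E : / rb - L = L * (q_in * hmix) / (1 - q_in * hmix)).
    { unfold rb, rhobar. fold vb. unfold vb, vbar.
      assert (W : (/ q_in - hmix) * q_in = 1 - q_in * hmix) by (field; lra).
      replace (/ (q_in / (L / (/ q_in - hmix)))) with (L / ((/ q_in - hmix) * q_in)) by (field; repeat split; lra).
      rewrite W. field. lra. }
    rewrite E. apply Rmult_lt_0_compat.
    - apply Rdiv_lt_0_compat; [lra|]. apply Rmult_lt_0_compat; [lra|]. nra.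
    - apply Rdiv_lt_0_compat; nra. }
  assert (HK4 : 0 < K4) by (unfold K4, cst4; apply Rdiv_lt_0_compat; lra).
  assert (HK5 : 0 < K5) by (unfold K5, cst5; apply Rdiv_lt_0_compat; lra).
  assert (Hv' : forall x t, in_Omega D x t -> k * v x t + (- K4) * v_x x t + v_t x t = 0).
  { intros x t HO. specialize (Hpv x t HO). rewrite (Hctrl x t HO) in Hpv.
    replace (K3 * (/ K3 * (- K1 * rho x t + (k - K2) * v x t))) with (- K1 * rho x t + (k - K2) * v x t) in Hpv
      by (field; lra). lra. }
  assert (HvD' : forall t, 0 < t -> k * v D t + v_t D t = 0).
  { intros t Ht. assert (HO : in_Omega D D t) by (split; red; lra).
    specialize (HbD t ltac:(red; lra)). rewrite (Hctrl D t HO) in HbD.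
    replace (K3 * (/ K3 * (- K1 * rho D t + (k - K2) * v D t))) with (- K1 * rho D t + (k - K2) * v D t) in HbD
      by (field; lra). lra. }
  clearbody tmix hmix vb rb K1 K2 K3 K4 K5.
  pose proof HCr as [Cr [Crx [Crt Dr]]]. pose proof HCv as [Cv [Cvx [Cvt Dv]]].
  assert (VD : forall t, 0 <= t -> v D t = exp (- k * t) * v D 0).
  { intros t Ht. rewrite <- (ode_D D v v_x v_t k HCv ltac:(lra) HvD' t Ht).
    rewrite <- Rmult_assoc, <- exp_plus. replace (- k * t + k * t) with 0 by ring. rewrite exp_0; ring. }
  assert (Vchar : forall x t s1, 0 <= x <= D -> 0 <= s1 <= t -> x + K4 * (t - s1) <= D ->
     exp (k * t) * v x t = exp (k * s1) * v (x + K4 * (t - s1)) s1).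
  { intros x t s1 Hx Hs Hle.
    pose proof (char D v v_x v_t k (- K4) x s1 t HCv Hs) as H.
    replace (x + - K4 * (s1 - t)) with (x + K4 * (t - s1)) in H by ring.
    apply H.
    - intros s Hs'. replace (x + - K4 * (s - t)) with (x + K4 * (t - s)) by ring.
      assert (0 <= K4 * (t - s)) by (apply Rmult_le_pos; lra).
      assert (K4 * (t - s) <= K4 * (t - s1)) by (apply Rmult_le_compat_l; lra). lra.
    - intros s Hs'. replace (x + - K4 * (s - t)) with (x + K4 * (t - s)) by ring.
      assert (0 < K4 * (t - s)) by (apply Rmult_lt_0_compat; lra).
      assert (K4 * (t - s) < K4 * (t - s1)) by (apply Rmult_lt_compat_l; lra). lra.
    - intros s Hs'. apply Hv'. replace (x + - K4 * (s - t)) with (x + K4 * (t - s)) by ring.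
      assert (0 < K4 * (t - s)) by (apply Rmult_lt_0_compat; lra).
      assert (K4 * (t - s) < K4 * (t - s1)) by (apply Rmult_lt_compat_l; lra).
      split; red; lra. }
  assert (Rchar : forall x t s1, 0 <= x <= D -> 0 <= s1 <= t -> 0 <= x - vb * (t - s1) ->
     (forall s y, s1 < s < t -> 0 <= y <= D -> v_x y s = 0) ->
     rho x t = rho (x - vb * (t - s1)) s1).
  { intros x t s1 Hx Hs Hle Hvx.
    pose proof (char D rho rho_x rho_t 0 vb x s1 t HCr Hs) as H.
    replace (x + vb * (s1 - t)) with (x - vb * (t - s1)) in H by ring.
    rewrite !Rmult_0_l, exp_0, !Rmult_1_l in H.
    apply H.
    - intros s Hs'. replace (x + vb * (s - t)) with (x - vb * (t - s)) by ring.
      assert (0 <= vb * (t - s)) by (apply Rmult_le_pos; lra).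
      assert (vb * (t - s) <= vb * (t - s1)) by (apply Rmult_le_compat_l; lra). lra.
    - intros s Hs'. replace (x + vb * (s - t)) with (x - vb * (t - s)) by ring.
      assert (0 < vb * (t - s)) by (apply Rmult_lt_0_compat; lra).
      assert (vb * (t - s) < vb * (t - s1)) by (apply Rmult_lt_compat_l; lra). lra.
    - intros s Hs'. replace (x + vb * (s - t)) with (x - vb * (t - s)) by ring.
      assert (0 < vb * (t - s)) by (apply Rmult_lt_0_compat; lra).
      assert (vb * (t - s) < vb * (t - s1)) by (apply Rmult_lt_compat_l; lra).
      assert (HO : in_Omega D (x - vb * (t - s)) s) by (split; red; lra).
      pose proof (Hpr _ _ HO) as HP. rewrite (Hvx s (x - vb * (t - s)) Hs' ltac:(lra)) in HP. lra. }
  assert (expK : forall a, exp a * exp (- a) = 1).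
  { intros a. rewrite <- exp_plus. replace (a + - a) with 0 by ring. apply exp_0. }
  assert (V1 : forall x t, 0 <= x <= D -> 0 <= t -> D <= x + K4 * t -> v x t = exp (- k * t) * v D 0).
  { intros x t Hx Ht Hle.
    set (z := (D - x) / K4).
    assert (Ez : K4 * z = D - x) by (unfold z; field; lra).
    assert (Hz0 : 0 <= z) by (unfold z; apply Rmult_le_pos; [lra| left; apply Rinv_0_lt_compat; lra]).
    assert (Hzt : z <= t) by nra.
    pose proof (Vchar x t (t - z) Hx ltac:(lra) ltac:(replace (t - (t - z)) with z by ring; lra)) as H.
    replace (x + K4 * (t - (t - z))) with D in H by (replace (t - (t - z)) with z by ring; lra).
    rewrite (VD (t - z)) in H by lra.
    replace (exp (k * (t - z)) * (exp (- k * (t - z)) * v D 0)) with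
      ((exp (k * (t - z)) * exp (- (k * (t - z)))) * v D 0) in H by (rewrite Ropp_mult_distr_l; ring).
    rewrite expK, Rmult_1_l in H. rewrite <- H.
    rewrite <- Rmult_assoc, Ropp_mult_distr_l_reverse, Rmult_comm with (r1 := exp _), expK. ring. }
  assert (VX0 : forall x t, 0 <= x <= D -> D / K4 <= t -> v_x x t = 0).
  { intros x t Hx Ht.
    assert (E : K4 * (D / K4) = D) by (field; lra).
    assert (Ht0 : 0 <= t) by (assert (0 <= D / K4) by (apply Rmult_le_pos; [lra| left; apply Rinv_0_lt_compat; lra]); lra).
    apply (dw_unique D (fun y => v y t) (fun _ => exp (- k * t) * v D 0) x); [lra|lra| | |].
    - intros z Hz. apply V1; auto. nra.
    - apply (Dv x t ltac:(split; red; lra)).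
    - exact (derivable_pt_lim_const _ _). }
  assert (HDK4 : 0 <= D / K4) by (apply Rmult_le_pos; [lra| left; apply Rinv_0_lt_compat; lra]).
  assert (HDvb : 0 <= D / vb) by (apply Rmult_le_pos; [lra| left; apply Rinv_0_lt_compat; lra]).
  assert (R1 : forall x t, 0 <= x <= D -> D / K4 + D / vb <= t ->
     rho x t = - K5 * v D 0 * exp (- k * (t - x / vb))).
  { intros x t Hx Ht.
    assert (Exv : vb * (x / vb) = x) by (field; lra).
    assert (Hxv : x / vb <= D / vb) by (apply Rmult_le_compat_r; [left; apply Rinv_0_lt_compat|]; lra).
    assert (Hxv0 : 0 <= x / vb) by (apply Rmult_le_pos; [lra| left; apply Rinv_0_lt_compat; lra]).
    rewrite (Rchar x t (t - x / vb)); auto; try lra.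
    - replace (x - vb * (t - (t - x / vb))) with 0 by (replace (t - (t - x / vb)) with (x / vb) by ring; lra).
      replace (rho 0 (t - x / vb)) with (- K5 * v 0 (t - x / vb)) by (pose proof (Hb0 (t - x / vb) ltac:(red; lra)); lra).
      rewrite (V1 0 (t - x / vb)); try lra.
      + assert (E : K4 * (D / K4) = D) by (field; lra).
        assert (K4 * (D / K4) <= K4 * (t - x / vb)) by (apply Rmult_le_compat_l; lra). lra.
    - intros s y Hs Hy. apply VX0; auto; lra. }
  assert (RX1 : forall x t, 0 <= x <= D -> D / K4 + D / vb <= t ->
     rho_x x t = - K5 * v D 0 * (k / vb) * exp (- k * (t - x / vb))).
  { intros x t Hx Ht.
    apply (dw_unique D (fun y => rho y t) (fun y => - K5 * v D 0 * exp (- k * (t - y / vb))) x); [lra|lra| | |].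
    - intros z Hz. apply R1; auto.
    - apply (Dr x t ltac:(split; red; lra)).
    - apply is_derive_Reals. auto_derive; auto. replace (t + - (x * / vb)) with (t - x / vb) by (unfold Rdiv; ring). unfold Rdiv; ring. }
  set (T := D / K4 + D / vb).
  assert (HT : 0 <= T) by (unfold T; lra).
  destruct (bnd2 D T rho HD HT Cr) as [B1 [HB1 Hb1]].
  destruct (bnd2 D T rho_x HD HT Crx) as [B2 [HB2 Hb2]].
  destruct (bnd2 D T v HD HT Cv) as [B3 [HB3 Hb3]].
  destruct (bnd2 D T v_x HD HT Cvx) as [B4 [HB4 Hb4]].
  assert (HD0 : 0 <= D) by lra.
  set (N := fun t => C1_norm D (fun x => rho x t) (fun x => rho_x x t)
      + C1_norm D (fun x => v x t) (fun x => v_x x t)).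
  change (exists mu, 0 < mu /\ forall t, 0 <= t -> N t <= mu * N 0 * exp (- (k / 2) * t)).
  assert (NB : forall t, 0 <= t <= T -> N t <= B1 + B2 + B3 + B4).
  { intros t Ht. unfold N, C1_norm.
    pose proof (proj2 (sup_props D (fun x => rho x t) B1 HD0 (fun x Hx => Hb1 x t Hx Ht))).
    pose proof (proj2 (sup_props D (fun x => rho_x x t) B2 HD0 (fun x Hx => Hb2 x t Hx Ht))).
    pose proof (proj2 (sup_props D (fun x => v x t) B3 HD0 (fun x Hx => Hb3 x t Hx Ht))).
    pose proof (proj2 (sup_props D (fun x => v_x x t) B4 HD0 (fun x Hx => Hb4 x t Hx Ht))).
    lra. }
  set (E := exp (k * (D / vb))).
  assert (HE0 : 0 < E) by apply exp_pos.
  assert (HE : forall x t, 0 <= x <= D -> exp (- k * (t - x / vb)) <= exp (- k * t) * E).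
  { intros x t Hx. replace (- k * (t - x / vb)) with (- k * t + k * (x / vb)) by ring.
    rewrite exp_plus. apply Rmult_le_compat_l; [left; apply exp_pos|]. apply exp_le.
    apply Rmult_le_compat_l; [lra|]. apply Rmult_le_compat_r; [left; apply Rinv_0_lt_compat|]; lra. }
  set (A := Rabs (v D 0) * (K5 * E + K5 * (k / vb) * E + 1)).
  assert (HA : 0 <= A).
  { unfold A. apply Rmult_le_pos; [apply Rabs_pos|].
    assert (0 <= K5 * E) by (apply Rmult_le_pos; lra).
    assert (0 <= K5 * (k / vb) * E).
    { apply Rmult_le_pos; [apply Rmult_le_pos; [lra| left; apply Rdiv_lt_0_compat; lra]| lra]. }
    lra. }
  assert (NL : forall t, T <= t -> N t <= A * exp (- k * t)).
  { intros t Ht. unfold N, C1_norm.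
    assert (Hek : 0 < exp (- k * t)) by apply exp_pos.
    assert (Hv0 : 0 <= Rabs (v D 0)) by apply Rabs_pos.
    pose proof ((sup_props D (fun x => rho x t) (K5 * Rabs (v D 0) * E * exp (- k * t)) HD0)) as S1.
    pose proof ((sup_props D (fun x => rho_x x t) (K5 * Rabs (v D 0) * (k / vb) * E * exp (- k * t)) HD0)) as S2.
    pose proof ((sup_props D (fun x => v x t) (Rabs (v D 0) * exp (- k * t)) HD0)) as S3.
    pose proof ((sup_props D (fun x => v_x x t) 0 HD0)) as S4.
    assert (A1 : sup_norm D (fun x => rho x t) <= K5 * Rabs (v D 0) * E * exp (- k * t)).
    { apply (fun H => proj2 (S1 H)). intros x Hx. rewrite R1 by (unfold T in Ht; lra).
      rewrite !Rabs_mult, Rabs_Ropp, (Rabs_pos_eq K5), (Rabs_pos_eq (exp _)) by (try lra; left; apply exp_pos).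
      specialize (HE x t Hx).
      replace (K5 * Rabs (v D 0) * E * exp (- k * t)) with (K5 * Rabs (v D 0) * (exp (- k * t) * E)) by ring.
      apply Rmult_le_compat_l; [apply Rmult_le_pos; lra| exact HE]. }
    assert (A2 : sup_norm D (fun x => rho_x x t) <= K5 * Rabs (v D 0) * (k / vb) * E * exp (- k * t)).
    { apply (fun H => proj2 (S2 H)). intros x Hx. rewrite RX1 by (unfold T in Ht; lra).
      assert (Hkv : 0 < k / vb) by (apply Rdiv_lt_0_compat; lra).
      rewrite !Rabs_mult, Rabs_Ropp, (Rabs_pos_eq K5), (Rabs_pos_eq (k / vb)), (Rabs_pos_eq (exp _)) by (try lra; left; apply exp_pos).
      specialize (HE x t Hx).
      replace (K5 * Rabs (v D 0) * (k / vb) * E * exp (- k * t)) with (K5 * Rabs (v D 0) * (k / vb) * (exp (- k * t) * E)) by ring.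
      apply Rmult_le_compat_l; [apply Rmult_le_pos; [apply Rmult_le_pos|]; lra| exact HE]. }
    assert (A3 : sup_norm D (fun x => v x t) <= Rabs (v D 0) * exp (- k * t)).
    { apply (fun H => proj2 (S3 H)). intros x Hx. rewrite V1; try lra.
      - rewrite Rabs_mult, (Rabs_pos_eq (exp _)) by (left; apply exp_pos). lra.
      - assert (K4 * (D / K4) = D) by (field; lra).
        assert (K4 * (D / K4) <= K4 * t) by (apply Rmult_le_compat_l; unfold T in Ht; lra). lra. }
    assert (A4 : sup_norm D (fun x => v_x x t) <= 0).
    { apply (fun H => proj2 (S4 H)). intros x Hx. rewrite VX0 by (unfold T in Ht; lra). rewrite Rabs_R0; lra. }
    unfold A. nra. }
  set (B := B1 + B2 + B3 + B4).
  set (C := B * exp (k * T / 2) + A).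
  assert (HB : 0 <= B) by (unfold B; lra).
  assert (Hdec : forall t, 0 <= t -> N t <= C * exp (- (k / 2) * t)).
  { intros t Ht. unfold C. assert (He : 0 < exp (- (k / 2) * t)) by apply exp_pos.
    assert (He2 : 0 < exp (k * T / 2)) by apply exp_pos.
    destruct (Rle_dec t T) as [HtT|HtT].
    - assert (X : 1 <= exp (k * T / 2) * exp (- (k / 2) * t)).
      { rewrite <- exp_plus, <- exp_0. apply exp_le.
        assert (k * t <= k * T) by (apply Rmult_le_compat_l; lra). lra. }
      specialize (NB t ltac:(lra)). fold B in NB.
      assert (B <= B * (exp (k * T / 2) * exp (- (k / 2) * t))) by (rewrite <- (Rmult_1_r B) at 1; apply Rmult_le_compat_l; lra).
      assert (0 <= A * exp (- (k / 2) * t)) by (apply Rmult_le_pos; lra).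
      nra.
    - specialize (NL t ltac:(lra)).
      assert (exp (- k * t) <= exp (- (k / 2) * t)) by (apply exp_le; nra).
      assert (A * exp (- k * t) <= A * exp (- (k / 2) * t)) by (apply Rmult_le_compat_l; lra).
      assert (0 <= B * exp (k * T / 2) * exp (- (k / 2) * t)) by (apply Rmult_le_pos; [apply Rmult_le_pos|]; lra).
      nra. }
  assert (HC : 0 <= C).
  { unfold C. assert (0 < exp (k * T / 2)) by apply exp_pos.
    assert (0 <= B * exp (k * T / 2)) by (apply Rmult_le_pos; lra). lra. }
  assert (HT0 : 0 <= 0 <= T) by lra.
  assert (Hx0 : 0 <= 0 <= D) by lra.
  pose proof (proj1 (sup_props D (fun x => rho x 0) B1 HD0 (fun x Hx => Hb1 x 0 Hx HT0))) as Z1.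
  pose proof (proj1 (sup_props D (fun x => rho_x x 0) B2 HD0 (fun x Hx => Hb2 x 0 Hx HT0))) as Z2.
  pose proof (proj1 (sup_props D (fun x => v x 0) B3 HD0 (fun x Hx => Hb3 x 0 Hx HT0))) as Z3.
  pose proof (proj1 (sup_props D (fun x => v_x x 0) B4 HD0 (fun x Hx => Hb4 x 0 Hx HT0))) as Z4.
  cbv beta in Z1, Z2, Z3, Z4.
  assert (N0e : N 0 = sup_norm D (fun x => rho x 0) + sup_norm D (fun x => rho_x x 0)
      + (sup_norm D (fun x => v x 0) + sup_norm D (fun x => v_x x 0))) by reflexivity.
  pose proof (Z1 0 Hx0); pose proof (Z2 0 Hx0); pose proof (Z3 0 Hx0); pose proof (Z4 0 Hx0).
  pose proof (Rabs_pos (rho 0 0)); pose proof (Rabs_pos (rho_x 0 0)); pose proof (Rabs_pos (v 0 0)); pose proof (Rabs_pos (v_x 0 0)).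
  destruct (Rle_lt_dec (N 0) 0) as [Hz|Hpos].
  2:{ exists (C / N 0 + 1). split.
      - assert (0 <= C / N 0) by (apply Rmult_le_pos; [lra| left; apply Rinv_0_lt_compat; lra]). lra.
      - intros t Ht. specialize (Hdec t Ht).
        replace ((C / N 0 + 1) * N 0) with (C + N 0) by (field; lra).
        assert (0 < exp (- (k / 2) * t)) by apply exp_pos. nra. }
  assert (Z0r : forall x, 0 <= x <= D -> rho x 0 = 0).
  { intros x Hx. specialize (Z1 x Hx). pose proof (Rabs_pos (rho x 0)).
    assert (Rabs (rho x 0) = 0) by lra. now apply Rabs_eq_0. }
  assert (Z0v : forall x, 0 <= x <= D -> v x 0 = 0).
  { intros x Hx. specialize (Z3 x Hx). pose proof (Rabs_pos (v x 0)).
    assert (Rabs (v x 0) = 0) by lra. now apply Rabs_eq_0. }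
  assert (VZ : forall x t, 0 <= x <= D -> 0 <= t -> v x t = 0).
  { intros x t Hx Ht. destruct (Rle_dec D (x + K4 * t)) as [Hle|Hlt].
    - rewrite V1 by auto. rewrite Z0v by lra. ring.
    - pose proof (Vchar x t 0 Hx ltac:(lra) ltac:(rewrite Rminus_0_r; lra)) as HVc.
      rewrite Rminus_0_r, Z0v in HVc.
      2:{ assert (0 <= K4 * t) by (apply Rmult_le_pos; lra). lra. }
      assert (0 < exp (k * t)) by apply exp_pos. nra. }
  assert (VXZ : forall x t, 0 <= x <= D -> 0 <= t -> v_x x t = 0).
  { intros x t Hx Ht.
    apply (dw_unique D (fun y => v y t) (fun _ => 0) x); [lra|lra| | |].
    - intros z Hzz. apply VZ; auto.
    - apply (Dv x t ltac:(split; red; lra)).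
    - exact (derivable_pt_lim_const _ _). }
  assert (RZ : forall x t, 0 <= x <= D -> 0 <= t -> rho x t = 0).
  { intros x t Hx Ht. destruct (Rle_dec (vb * t) x) as [Hle|Hlt].
    - rewrite (Rchar x t 0); try lra.
      + apply Z0r. rewrite Rminus_0_r. assert (0 <= vb * t) by (apply Rmult_le_pos; lra). lra.
      + intros s y Hs Hy. apply VXZ; lra.
    - assert (Exv : vb * (x / vb) = x) by (field; lra).
      assert (Hxv0 : 0 <= x / vb) by (apply Rmult_le_pos; [lra| left; apply Rinv_0_lt_compat; lra]).
      assert (Hxt : x / vb < t) by nra.
      rewrite (Rchar x t (t - x / vb)); try lra.
      + replace (x - vb * (t - (t - x / vb))) with 0 by (replace (t - (t - x / vb)) with (x / vb) by ring; lra).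
        pose proof (Hb0 (t - x / vb) ltac:(red; lra)) as HB0z. rewrite VZ in HB0z by lra. lra.
      + intros s y Hs Hy. apply VXZ; lra. }
  assert (RXZ : forall x t, 0 <= x <= D -> 0 <= t -> rho_x x t = 0).
  { intros x t Hx Ht.
    apply (dw_unique D (fun y => rho y t) (fun _ => 0) x); [lra|lra| | |].
    - intros z Hzz. apply RZ; auto.
    - apply (Dr x t ltac:(split; red; lra)).
    - exact (derivable_pt_lim_const _ _). }
  exists 1. split; [lra|]. intros t Ht.
  assert (HN0 : N 0 = 0) by lra. rewrite HN0, Rmult_0_r, Rmult_0_l.
  unfold N, C1_norm.
  pose proof (proj2 (sup_props D (fun x => rho x t) 0 HD0 ltac:(intros x Hx; cbv beta; rewrite RZ by auto; rewrite Rabs_R0; lra))).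
  pose proof (proj2 (sup_props D (fun x => rho_x x t) 0 HD0 ltac:(intros x Hx; cbv beta; rewrite RXZ by auto; rewrite Rabs_R0; lra))).
  pose proof (proj2 (sup_props D (fun x => v x t) 0 HD0 ltac:(intros x Hx; cbv beta; rewrite VZ by auto; rewrite Rabs_R0; lra))).
  pose proof (proj2 (sup_props D (fun x => v_x x t) 0 HD0 ltac:(intros x Hx; cbv beta; rewrite VXZ by auto; rewrite Rabs_R0; lra))).
  lra.
Qed.
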